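(* Assume that for every $y\in\mathcal Y$ the map $u\mapsto\ell(y,u)$ is convex and twice continuously differentiable, and that for every $y$ the map $u\mapsto s(y,u)$ is $\gamma$-Lipschitz continuous for some $\gamma\in(0,\infty)$. Then for every $y\in\mathcal Y$, $$|S_{\lambda;D^y}(X_i,Y_i)-\tilde S_{\lambda;D^y}(X_i,Y_i)|\le\tau^{(1)}_{\lambda;i}(y)\ (1\le i\le n),\qquad |S_{\lambda;D^y}(X_{n+1},y)-\tilde S_{\lambda;D^y}(X_{n+1},y)|\le\tau^{(1)}_{\lambda;n+1}(y),$$ where for every $i\in\{1,\dots,n+1\}$, $\tau^{(1)}_{\lambda;i}(y)=\sqrt{K_{i,i}}\sqrt{K_{n+1,n+1}}\frac{\gamma\rho^{(1)}_\lambda(y)}{\lambda(n+1)}$ with $\rho^{(1)}_\lambda(y)=\frac12\big|-\partial_2\ell(z,\hat f_{\lambda;D^z}(X_{n+1}))+\partial_2\ell(y,\hat f_{\lambda;D^z}(X_{n+1}))\big|$.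
   Context: Let $\mathcal X\subset\mathbb R^d$, $\mathcal Y\subset\mathbb R$, $D=\{(X_1,Y_1),\dots,(X_n,Y_n)\}$ i.i.d. with distribution $P$ on $\mathcal X\times\mathcal Y$, $(X_{n+1},Y_{n+1})\sim P$ independent. For $y\in\mathcal Y$, $D^y=D\cup\{(X_{n+1},y)\}$. $\mathcal H$ is an RKHS of functions $\mathcal X\to\mathbb R$ with kernel $\kappa_{\mathcal H}$; $K=(\kappa_{\mathcal H}(X_i,X_j))_{1\le i,j\le n+1}$. For a loss $\ell$ and $\lambda>0$, $\hat f_{\lambda;D^y}$ minimizes $\frac1{n+1}\sum_{(x,y')\in D^y}\ell(y',f(x))+\lambda\|f\|^2_{\mathcal H}$ over $\mathcal H$. For $s:\mathcal Y\times\mathcal Y\to\mathbb R_+$: $S_{\lambda;D^y}(X_i,Y_i)=s(Y_i,\hat f_{\lambda;D^y}(X_i))$ ($i\le n$), $S_{\lambda;D^y}(X_{n+1},y)=s(y,\hat f_{\lambda;D^y}(X_{n+1}))$. A point $z\in\mathcal Y$ is fixed and $\tilde S_{\lambda;D^y}(X_i,Y_i)=s(Y_i,\hat f_{\lambda;D^z}(X_i))$ ($i\le n$), $\tilde S_{\lambda;D^y}(X_{n+1},y)=s(y,\hat f_{\lambda;D^z}(X_{n+1}))$. $\partial_2\ell$ is the derivative in the second argument. *)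

(* Defs.v *)
From HB Require Import structures.
From mathcomp Require Import all_boot all_order all_algebra.
From mathcomp Require Import all_classical all_reals all_analysis.
Set Implicit Arguments. Unset Strict Implicit. Unset Printing Implicit Defensive.
Import Order.TTheory GRing.Theory Num.Theory.
Import numFieldNormedType.Exports.
Local Open Scope classical_set_scope.
Local Open Scope ring_scope.

Definition is_inner_product (R : realType) (V : lmodType R) (ip : V -> V -> R) :=
  [/\ (forall u v, ip u v = ip v u),
      (forall a u v w, ip (a *: u + v) w = a * ip u w + ip v w),
      (forall u, 0 <= ip u u) &
      (forall u, ip u u = 0 -> u = 0)].

(* Completeness w.r.t. the norm sqrt(ip u u) (Cauchy sequences converge);
   stated with the squared norm. *)
Definition ip_complete (R : realType) (V : lmodType R) (ip : V -> V -> R) :=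
  forall u : nat -> V,
    (forall e : R, 0 < e -> exists N : nat, forall m p : nat, (N <= m)%N -> (N <= p)%N ->
        ip (u m - u p) (u m - u p) < e) ->
    exists l : V, forall e : R, 0 < e -> exists N : nat, forall m : nat, (N <= m)%N ->
        ip (u m - l) (u m - l) < e.

(* A reproducing kernel Hilbert space of real functions on the set calX of a type X:
   a Hilbert space V whose elements are (injectively) real functions on calX,
   evaluation being linear, with reproducing kernel sections kx x in V such that
   f x = <f, kx x> for x in calX. *)
Record RKHS (R : realType) (X : Type) (calX : set X) := {
  rk_V :> lmodType R;
  rk_ip : rk_V -> rk_V -> R;
  rk_eval : rk_V -> X -> R;
  rk_sec : X -> rk_V;
  rk_ip_ok : is_inner_product rk_ip;
  rk_complete : ip_complete rk_ip;
  rk_eval_lin : forall a f g x, rk_eval (a *: f + g) x = a * rk_eval f x + rk_eval g x;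
  rk_eval_inj : forall f g, (forall x, calX x -> rk_eval f x = rk_eval g x) -> f = g;
  rk_reprod : forall f x, calX x -> rk_eval f x = rk_ip f (rk_sec x)
}.

Definition rk_kernel (R : realType) (X : Type) (calX : set X) (H : RKHS R calX)
  (x x' : X) : R := rk_ip (rk_sec H x) (rk_sec H x').

(* Augmented labels of D^y: index i < n gives Y_i, index n (= X_{n+1}) gives y. *)
Definition augY (R : realType) (n : nat) (Ys : 'I_n -> R) (y : R) (i : 'I_n.+1) : R :=
  match ltnP i n with
  | LtnNotGeq h => Ys (Ordinal h)
  | _ => y
  end.

Definition reg_risk (R : realType) (X : Type) (calX : set X) (H : RKHS R calX)
  (l : R -> R -> R) (lam : R) (n : nat) (Xs : 'I_n.+1 -> X) (Ys : 'I_n -> R) (y : R)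
  (f : H) : R :=
  (n.+1%:R)^-1 * (\sum_(i < n.+1) l (augY Ys y i) (rk_eval f (Xs i)))
  + lam * rk_ip f f.

Definition is_minimizer (R : realType) (X : Type) (calX : set X) (H : RKHS R calX)
  (l : R -> R -> R) (lam : R) (n : nat) (Xs : 'I_n.+1 -> X) (Ys : 'I_n -> R) (y : R)
  (f : H) : Prop :=
  forall g : H, reg_risk l lam Xs Ys y f <= reg_risk l lam Xs Ys y g.

Definition convex_fun (R : realType) (g : R -> R) : Prop :=
  forall a b t : R, 0 <= t <= 1 -> g (t * a + (1 - t) * b) <= t * g a + (1 - t) * g b.

Definition C2 (R : realType) (g : R -> R) : Prop :=
  (forall u : R, derivable g u 1) /\ (forall u : R, derivable (derive1 g) u 1) /\
  continuous (derive1 (derive1 g)).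

Definition d2 (R : realType) (l : R -> R -> R) (y u : R) : R := derive1 (l y) u.

(* Main.v *)
Require Import Defs.
From HB Require Import structures.
From mathcomp Require Import all_boot all_order all_algebra.
From mathcomp Require Import all_classical all_reals all_analysis.
From mathcomp Require Import ring lra.
Import Order.TTheory GRing.Theory Num.Theory.
Import numFieldNormedType.Exports.
Local Open Scope classical_set_scope.
Local Open Scope ring_scope.

Lemma tangent1 (R : realType) (g : R -> R) (a b : R) :
  convex_fun g -> derivable g a 1 -> g a + derive1 g a * (b - a) <= g b.
Proof.
move=> cg dg.
have key : forall h, 0 < h / (b - a) <= 1 ->
    g (h + a) - g a <= h / (b - a) * (g b - g a).
  move=> h /andP[t0 t1].
  have := cg b a (h / (b - a)); rewrite t1 ltW //= => /(_ isT).
  have -> : h / (b - a) * b + (1 - h / (b - a)) * a = h + a.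
    have ba : b - a != 0.
      apply/eqP => ba; move: t0; by rewrite ba invr0 mulr0 ltxx.
    by field.
  lra.
have [ab|ab|ab] := ltgtP a b; last by rewrite ab subrr mulr0 addr0.
- have ba : 0 < b - a by rewrite subr_gt0.
  suff : derive1 g a <= (g b - g a) / (b - a).
    by rewrite ler_pdivlMr // lerBrDl addrC.
  rewrite derive1E.
  rewrite ['D_1 g a]cvg_at_rightE; last exact: dg.
  apply: limr_le.
    rewrite -(cvg_at_rightE (fun h : R => h^-1 *: ((g \o shift a) (h *: 1) - g a))) //.
    apply: cvg_trans dg; apply: cvg_app.
    move=> A [e egt0 Ae]; exists e => // x xe xgt0; apply: Ae => //.
    exact/lt0r_neq0.
  near=> h.
  have hpos : 0 < h by near: h; exists 1 => /=.
  have hle : h <= b - a.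
    near: h; exists (b - a) => // h /=; rewrite distrC subr0 => /(le_lt_trans (ler_norm _)) /ltW //.
  rewrite /= [_ *: 1]mulr1 /shift /= -[_ *: _]/(_ * _).
  have := key h; rewrite divr_gt0 //= ler_pdivrMr // mul1r hle => /(_ isT) K.
  rewrite -(ler_pM2l hpos) mulrA mulfV ?gt_eqF // mul1r.
  by rewrite mulrA mulrAC.
- have ba : b - a < 0 by rewrite subr_lt0.
  suff : (g b - g a) / (b - a) <= derive1 g a.
    by rewrite ler_ndivrMr // addrC -lerBrDl mulrC.
  rewrite derive1E.
  rewrite ['D_1 g a]cvg_at_leftE; last exact: dg.
  apply: limr_ge.
    rewrite -(cvg_at_leftE (fun h : R => h^-1 *: ((g \o shift a) (h *: 1) - g a))) //.
    apply: cvg_trans dg; apply: cvg_app.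
    move=> A [e egt0 Ae]; exists e => // x xe xgt0; apply: Ae => //.
    exact/ltr0_neq0.
  near=> h.
  have hneg : h < 0 by near: h; exists 1 => /=.
  have hle : b - a <= h.
    near: h; exists (a - b); first by rewrite /= subr_gt0.
    move=> h /=; rewrite distrC subr0 => /ltr_normlP [] ? ? ?; lra.
  rewrite /= [_ *: 1]mulr1 /shift /= -[_ *: _]/(_ * _).
  have := key h; rewrite ltr_ndivlMr //= mul0r hneg /= ler_ndivrMr // mul1r hle => /(_ isT) K.
  rewrite -(ler_nM2l hneg) mulrA mulfV ?lt_eqF // mul1r.
  by rewrite mulrA mulrAC.
Unshelve. all: by end_near.
Qed.
Lemma is_derive_affc (R : realType) (g : R -> R) (a b t : R) :
  (forall u, derivable g u 1) ->
  is_derive t 1 (fun s => g (a + s * b)) (derive1 g (a + t * b) * b).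
Proof.
move=> dg.
have df : is_derive t 1 (fun s : R => a + s * b) b.
  apply: is_derive_eq; rewrite add0r mul1r scaler0 add0r; exact: mulr1.
have dfb : derivable (fun s : R => a + s * b) t 1 by case: df.
have dgf : derivable (g \o (fun s : R => a + s * b)) t 1.
  apply/derivable1_diffP; apply: differentiable_comp; apply/derivable1_diffP => //.
apply: DeriveDef; first exact: dgf.
rewrite -derive1E.
have := derive1_comp dfb (dg _).
rewrite /comp => ->.
rewrite derive1E; congr (_ * _); rewrite derive1E; exact: (derive_val (is_derive:=df)).
Qed.

Lemma quad_der (R : realType) (A B C t : R) :
  is_derive t 1 (fun s : R => A + s * B + s ^+ 2 * C) (B + 2 * t * C).
Proof.
apply: is_derive_eq; rewrite add0r mul1r !scaler0 !add0r.
rewrite -[B%:A]/(B * 1) -[t%:A]/(t * 1) -[C *: _]/(C * _); ring.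
Qed.

Section RK.
Variables (R : realType) (X : Type) (calX : set X) (H : RKHS R calX).
Local Notation ip := (@rk_ip R X calX H).
Local Notation ev := (@rk_eval R X calX H).

Lemma ip_sym (u v : H) : ip u v = ip v u.
Proof. by case: (rk_ip_ok H). Qed.

Lemma ip_lin a (u v w : H) : ip (a *: u + v) w = a * ip u w + ip v w.
Proof. by case: (rk_ip_ok H). Qed.

Lemma ip_ge0 (u : H) : 0 <= ip u u.
Proof. by case: (rk_ip_ok H). Qed.

Lemma ip_def (u : H) : ip u u = 0 -> u = 0.
Proof. by case: (rk_ip_ok H) => _ _ _; apply. Qed.

Lemma ip0l (w : H) : ip 0 w = 0.
Proof.
have := ip_lin 1 0 0 w; rewrite scaler0 addr0 mul1r => E; lra.
Qed.

Lemma ipZl a (u w : H) : ip (a *: u) w = a * ip u w.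
Proof. by have := ip_lin a u 0 w; rewrite addr0 ip0l addr0. Qed.

Lemma ipDl (u v w : H) : ip (u + v) w = ip u w + ip v w.
Proof. by have := ip_lin 1 u v w; rewrite scale1r mul1r. Qed.

Lemma ipNl (u w : H) : ip (- u) w = - ip u w.
Proof. by rewrite -scaleN1r ipZl mulN1r. Qed.

Lemma ip_quad (f v : H) t :
  ip (f + t *: v) (f + t *: v) = ip f f + t * (2 * ip f v) + t ^+ 2 * ip v v.
Proof.
rewrite !ipDl !ipZl (ip_sym f (f + _)) (ip_sym v (f + _)) !ipDl !ipZl (ip_sym v f).
ring.
Qed.

Lemma ip_NN (u : H) : ip (- u) (- u) = ip u u.
Proof. by rewrite ipNl ip_sym ipNl opprK. Qed.

Lemma evDZ (f v : H) t x : ev (f + t *: v) x = ev f x + t * ev v x.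
Proof. by rewrite addrC rk_eval_lin addrC. Qed.

Lemma evB (f g : H) x : ev (g - f) x = ev g x - ev f x.
Proof. by have := evDZ g f (-1) x; rewrite scaleN1r mulN1r. Qed.

Lemma CS (u v : H) : `|ip u v| <= Num.sqrt (ip u u) * Num.sqrt (ip v v).
Proof.
have [C0|Cn0] := eqVneq (ip v v) 0.
  rewrite (ip_def _ C0) ip_sym ip0l normr0.
  by rewrite mulr_ge0 // sqrtr_ge0.
have Cp : 0 < ip v v by rewrite lt_def Cn0 ip_ge0.
have := ip_ge0 (ip v v *: u + (- ip u v) *: v).
rewrite ip_quad !ipZl (ip_sym u (_ *: u)) ipZl => H0.
have key : ip u v ^+ 2 <= ip u u * ip v v.
  have E : ip v v * (ip v v * ip u u) + - ip u v * (2 * (ip v v * ip u v)) +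
      (- ip u v) ^+ 2 * ip v v = ip v v * (ip u u * ip v v - ip u v ^+ 2) by ring.
  by rewrite E pmulr_rge0 // subr_ge0 in H0.
rewrite -sqrtrM ?ip_ge0 // -sqrtr_sqr.
by rewrite ler_sqrt // mulr_ge0 ?ip_ge0.
Qed.

End RK.

Section Risk.
Variables (R : realType) (X : Type) (calX : set X) (H : RKHS R calX).
Variables (l : R -> R -> R) (lam : R) (n : nat) (Xs : 'I_n.+1 -> X) (Ys : 'I_n -> R).
Local Notation ip := (@rk_ip R X calX H).
Local Notation ev := (@rk_eval R X calX H).

Definition Dir (w : R) (f v : H) : R :=
  (n.+1%:R)^-1 * (\sum_(i < n.+1) d2 l (augY Ys w i) (ev f (Xs i)) * ev v (Xs i))
  + lam * (2 * ip f v).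

Lemma risk_line w (f v : H) t :
  reg_risk l lam Xs Ys w (f + t *: v) =
  (n.+1%:R)^-1 * (\sum_(i < n.+1) l (augY Ys w i) (ev f (Xs i) + t * ev v (Xs i)))
  + lam * (ip f f + t * (2 * ip f v) + t ^+ 2 * ip v v).
Proof.
rewrite /reg_risk ip_quad; congr (_ * _ + _); apply: eq_bigr => i _.
by rewrite evDZ.
Qed.

Lemma tangent_R w (f g : H) :
  (forall i, convex_fun (l (augY Ys w i))) ->
  (forall i u, derivable (l (augY Ys w i)) u 1) ->
  reg_risk l lam Xs Ys w f + Dir w f (g - f) + lam * ip (g - f) (g - f)
  <= reg_risk l lam Xs Ys w g.
Proof.
move=> cv dv.
have -> : reg_risk l lam Xs Ys w g = reg_risk l lam Xs Ys w (f + 1 *: (g - f)).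
  by rewrite scale1r addrC subrK.
rewrite risk_line /reg_risk /Dir.
set c := (n.+1%:R)^-1.
have hc : 0 <= c by rewrite invr_ge0 ler0n.
have S : \sum_(i < n.+1) l (augY Ys w i) (ev f (Xs i)) +
    \sum_(i < n.+1) d2 l (augY Ys w i) (ev f (Xs i)) * ev (g - f) (Xs i) <=
    \sum_(i < n.+1) l (augY Ys w i) (ev f (Xs i) + 1 * ev (g - f) (Xs i)).
  rewrite -big_split /=; apply: ler_sum => i _; rewrite mul1r.
  have := @tangent1 _ _ (ev f (Xs i)) (ev f (Xs i) + ev (g - f) (Xs i)) (cv i) (dv i (ev f (Xs i))).
  by rewrite /d2 (addrC (ev f (Xs i))) addrK.
have := ler_wpM2l hc S; rewrite mulrDr => K.
rewrite expr1n !mul1r; lra.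
Qed.

Lemma fermat_R w (f v : H) :
  (forall i u, derivable (l (augY Ys w i)) u 1) ->
  is_minimizer l lam Xs Ys w f -> Dir w f v = 0.
Proof.
move=> dv mf.
pose a i := ev f (Xs i); pose b i := ev v (Xs i).
pose c := (n.+1%:R)^-1 : R.
pose A := ip f f; pose B := 2 * ip f v; pose C := ip v v.
pose psi := fun t : R => c * (\sum_(i < n.+1) l (augY Ys w i) (a i + t * b i))
   + lam * (A + t * B + t ^+ 2 * C).
have dpsi (t : R) : is_derive t 1 psi
   (c * (\sum_(i < n.+1) derive1 (l (augY Ys w i)) (a i + t * b i) * b i)
    + lam * (B + 2 * t * C)).
  have dS := is_derive_sum (fun i => @is_derive_affc _ _ (a i) (b i) t (dv i)).
  rewrite fct_sumE in dS.
  exact: (is_deriveD (is_deriveZ c dS) (is_deriveZ lam (@quad_der _ A B C t))).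
have m0 : is_derive (0:R) (1:R) psi (0:R).
  apply: (@derive1_at_min _ psi (-1 : R) (1 : R) (0 : R)).
  - lra.
  - by move=> t _; case: (dpsi t).
  - by rewrite in_itv /= ltrN10 ltr01.
  - move=> t _.
    have E s : psi s = reg_risk l lam Xs Ys w (f + s *: v) by rewrite risk_line.
    by rewrite !E scale0r addr0; exact: mf.
have := derive_val (is_derive := m0); rewrite (derive_val (is_derive := dpsi 0)).
move=> E; apply: etrans E; rewrite /Dir /d2 mulr0 mul0r !addr0.
by under [in RHS]eq_bigr => i _ do rewrite mul0r addr0.
Qed.

Lemma augY_widen w (i : 'I_n) : augY Ys w (widen_ord (leqnSn n) i) = Ys i.
Proof.
rewrite /augY; case: ltnP => [h|h]; first by congr Ys; apply: val_inj.
by exfalso; move: h; rewrite /= leqNgt ltn_ord.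
Qed.

Lemma augY_max w : augY Ys w ord_max = w.
Proof. by rewrite /augY; case: ltnP => //= h; exfalso; move: h; rewrite ltnn. Qed.

Lemma Dir_diff y z (f v : H) :
  Dir y f v - Dir z f v = (n.+1%:R)^-1 *
    ((d2 l y (ev f (Xs ord_max)) - d2 l z (ev f (Xs ord_max))) * ev v (Xs ord_max)).
Proof.
rewrite /Dir !big_ord_recr /= !augY_max.
under eq_bigr => i _ do rewrite augY_widen.
under [X in _ - (_ * (X + _) + _)]eq_bigr => i _ do rewrite augY_widen.
ring.
Qed.

End Risk.

Lemma augY_in (R : realType) (calY : set R) n (Ys : 'I_n -> R) w :
  calY w -> (forall i, calY (Ys i)) -> forall i, calY (augY Ys w i).
Proof. by move=> hw hY i; rewrite /augY; case: ltnP. Qed.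
Arguments augY_in {R calY n Ys w}.


Theorem theorem13 (R : realType) (d : nat) (calX : set 'rV[R]_d) (calY : set R)
  (H : RKHS R calX) (l s : R -> R -> R) (gam lam : R) (n : nat)
  (Xs : 'I_n.+1 -> 'rV[R]_d) (Ys : 'I_n -> R) (z : R) :
  (forall i, calX (Xs i)) -> (forall i, calY (Ys i)) -> calY z ->
  0 < lam ->
  (forall y u, 0 <= s y u) ->
  (forall y, calY y -> convex_fun (l y) /\ C2 (l y)) ->
  0 < gam ->
  (forall y, calY y -> forall u v, `|s y u - s y v| <= gam * `|u - v|) ->
  forall (y : R), calY y ->
  forall (fy fz : H),
    is_minimizer l lam Xs Ys y fy ->
    is_minimizer l lam Xs Ys z fz ->
  let xn1 := Xs ord_max in
  let rho := 2^-1 * `|- d2 l z (rk_eval fz xn1) + d2 l y (rk_eval fz xn1)| in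
  forall i : 'I_n.+1,
    `|s (augY Ys y i) (rk_eval fy (Xs i)) - s (augY Ys y i) (rk_eval fz (Xs i))|
    <= Num.sqrt (rk_kernel H (Xs i) (Xs i)) * Num.sqrt (rk_kernel H xn1 xn1)
       * (gam * rho / (lam * n.+1%:R)).
Proof.
move=> hX hY hz hlam hs hl hgam hlip y hy fy fz my mz xn1 rho i.
have cvx w : calY w -> forall j, convex_fun (l (augY Ys w j)).
  by move=> hw j; case: (hl _ (augY_in hw hY j)).
have drv w : calY w -> forall j u, derivable (l (augY Ys w j)) u 1.
  by move=> hw j u; case: (hl _ (augY_in hw hY j)) => _ [].
set h := fy - fz.
have T1 := @tangent_R _ _ _ H l lam n Xs Ys y fz fy (cvx y hy) (drv y hy).
have T2 := @tangent_R _ _ _ H l lam n Xs Ys y fy fz (cvx y hy) (drv y hy).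
have F1 := @fermat_R _ _ _ H l lam n Xs Ys y fy (fz - fy) (drv y hy) my.
have F2 := @fermat_R _ _ _ H l lam n Xs Ys z fz h (drv z hz) mz.
have DD := @Dir_diff _ _ _ H l lam n Xs Ys y z fz h.
have ipN : rk_ip (fz - fy) (fz - fy) = rk_ip h h by rewrite -opprB ip_NN.
rewrite F1 ipN addr0 in T2.
rewrite F2 subr0 in DD.
rewrite -/h DD in T1.
set c := (n.+1%:R)^-1 in T1.
set N := rk_ip h h in T1 T2.
set Del := d2 l y (rk_eval fz (Xs ord_max)) - d2 l z (rk_eval fz (Xs ord_max)) in T1.
set b := rk_eval h (Xs ord_max) in T1.
have main : 2 * lam * N <= - (c * (Del * b)) by lra.
have hc : 0 <= c by rewrite invr_ge0 ler0n.
have CSb : `|b| <= Num.sqrt N * Num.sqrt (rk_kernel H xn1 xn1).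
  by rewrite /b rk_reprod // CS.
have Delr : `|Del| = 2 * rho.
  rewrite /rho mulrA divff ?mul1r; last by rewrite pnatr_eq0.
  by rewrite addrC.
have rho0 : 0 <= rho by rewrite /rho mulr_ge0 // invr_ge0 ler0n.
set sN := Num.sqrt N.
set sKn := Num.sqrt (rk_kernel H xn1 xn1).
set sKi := Num.sqrt (rk_kernel H (Xs i) (Xs i)).
have sN0 : 0 <= sN by apply: sqrtr_ge0.
have sKn0 : 0 <= sKn by apply: sqrtr_ge0.
have sKi0 : 0 <= sKi by apply: sqrtr_ge0.
have NE : N = sN ^+ 2 by rewrite sqr_sqrtr // ip_ge0.
have bnd : - (c * (Del * b)) <= c * (2 * rho) * (sN * sKn).
  rewrite -mulrA; apply: le_trans (ler_norm _) _.
  rewrite normrN normrM (ger0_norm hc); apply: ler_wpM2l => //.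
  by rewrite normrM Delr; apply: ler_wpM2l => //; rewrite mulr_ge0.
have hN : lam * sN <= c * rho * sKn.
  have [->|sNp] := eqVneq sN 0; first by rewrite mulr0 mulr_ge0 // mulr_ge0.
  have sNpos : 0 < sN by rewrite lt_def sNp sN0.
  have : 2 * sN * (lam * sN) <= 2 * sN * (c * rho * sKn).
    have E1 : 2 * sN * (lam * sN) = 2 * lam * N by rewrite NE; ring.
    have E2 : 2 * sN * (c * rho * sKn) = c * (2 * rho) * (sN * sKn) by ring.
    by rewrite E1 E2; apply: le_trans main bnd.
  by rewrite ler_pM2l // mulr_gt0.
have hN' : sN <= c * rho * sKn / lam by rewrite ler_pdivlMr // mulrC.
have bi : `|rk_eval fy (Xs i) - rk_eval fz (Xs i)| <= sN * sKi.
  by rewrite -evB rk_reprod // CS.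
apply: le_trans (hlip _ (augY_in hy hY i) _ _) _.
apply: le_trans (ler_wpM2l (ltW hgam) bi) _.
have -> : sKi * sKn * (gam * rho / (lam * n.+1%:R)) = gam * sKi * (c * rho * sKn / lam).
  by rewrite /c invfM; ring.
rewrite (mulrC sN) mulrA; apply: ler_wpM2l => //.
by rewrite mulr_ge0 // ltW.
Qed.
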